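(* Let $p \in (0,\tfrac12)$ and $c\in(0,1)$ be constants. Every (possibly randomized, possibly adaptive) algorithm that solves FT-Min$(k)$ on $n$ elements with high probability, for $1 \le k \le c\cdot n$, performs an expected number of comparisons of $\Omega(\frac{n}{k}\log n)$ (on some input instance), where the hidden constant depends only on $p$ and $c$.
   Context: FT-Min$(k)$ (fault-tolerant approximate minimum selection): the input is a set $S$ of $n$ distinct elements of a totally ordered set; the algorithm can access the order only through pairwise comparisons. A comparison of distinct $x,y$ reports ''$x<y$'' or ''$x>y$'', and reports the wrong relation with probability (at most) $p$, independently of all other comparisons (repeated comparisons of the same pair are also independent). The goal is to output one of the $k$ smallest elements of $S$. An algorithm solves it with high probability if on every input it outputs one of the $k$ smallest elements with probability at least $1-\frac1n$. Algorithms may be randomized and adaptive. *)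

(* Defs.v *)
From HB Require Import structures.
From mathcomp Require Import all_boot all_order all_algebra all_fingroup.
From mathcomp Require Import all_classical all_reals all_analysis.
Set Implicit Arguments. Unset Strict Implicit. Unset Printing Implicit Defensive.
Import Order.TTheory GRing.Theory Num.Theory.
Local Open Scope ring_scope.

(* Model of a (randomized, adaptive) comparison algorithm on the elements
   'I_n (the labels of the n distinct input elements).
   The algorithm is a strategy: given the history of all bits observed so
   far (answers of comparisons and outcomes of its own coin flips) it chooses
   its next action:
   - [Output i]    : stop and output element i;
   - [Compare i j] : ask the noisy oracle whether "i < j";
   - [Flip q]      : flip a private coin that shows [true] with probability q.
   Arbitrary (even unbounded / non-terminating) strategies are allowed. *)
Inductive action (R : Type) (n : nat) :=
  | Output of 'I_n
  | Compare of 'I_n & 'I_n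
  | Flip of R.
Arguments Output {R n}.
Arguments Compare {R n}.
Arguments Flip {R n}.

Definition algorithm (R : Type) (n : nat) := seq bool -> action R n.

Definition valid_alg (R : realType) (n : nat) (A : algorithm R n) : Prop :=
  forall h q, A h = Flip q -> 0 <= q <= 1.

(* An input instance: a permutation [pi] giving the rank of each element in
   the (hidden) total order; element i is smaller than element j iff
   (pi i < pi j). The k smallest elements are those with rank < k. *)

Definition step_prob (R : realType) (n : nat) (p : R) (A : algorithm R n)
    (pi : 'S_n) (h : seq bool) (b : bool) : R :=
  match A h with
  | Output _ => 0
  | Compare i j => if b == (pi i < pi j)%N then 1 - p else p
  | Flip q => if b then q else 1 - q
  end.

Fixpoint prefix_prob_rec (R : realType) (n : nat) (p : R) (A : algorithm R n)
    (pi : 'S_n) (pre h : seq bool) : R :=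
  match h with
  | [::] => 1
  | b :: t => step_prob p A pi pre b * prefix_prob_rec p A pi (rcons pre b) t
  end.

Definition reach_prob (R : realType) (n : nat) (p : R) (A : algorithm R n)
    (pi : 'S_n) (h : seq bool) : R := prefix_prob_rec p A pi [::] h.

Definition is_compare (R : Type) (n : nat) (a : action R n) : bool :=
  if a is Compare _ _ then true else false.

Definition outputs_topk (R : Type) (n : nat) (pi : 'S_n) (k : nat)
    (a : action R n) : bool :=
  if a is Output i then (pi i < k)%N else false.

Definition expected_comparisons (R : realType) (n : nat) (p : R)
    (A : algorithm R n) (pi : 'S_n) : \bar R :=
  (\sum_(0 <= t <oo)
     (\sum_(h : t.-tuple bool | is_compare (A h)) reach_prob p A pi h)%:E)%E.

Definition success_prob (R : realType) (n : nat) (p : R) (A : algorithm R n)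
    (pi : 'S_n) (k : nat) : \bar R :=
  (\sum_(0 <= t <oo)
     (\sum_(h : t.-tuple bool | outputs_topk pi k (A h)) reach_prob p A pi h)%:E)%E.

Definition solves_ftmin_whp (R : realType) (n : nat) (p : R)
    (A : algorithm R n) (k : nat) : Prop :=
  forall pi : 'S_n, ((1 - n%:R^-1)%:E <= success_prob p A pi k)%E.

(* Main.v *)
Require Import Defs.
From HB Require Import structures.
From mathcomp Require Import all_boot all_order all_algebra all_fingroup.
From mathcomp Require Import all_classical all_reals all_analysis.
From mathcomp Require Import ring lra zify.
Import Order.TTheory GRing.Theory Num.Theory.
Local Open Scope ring_scope.
Lemma sum_tupleS (R : realType) t (f : seq bool -> R) :
  \sum_(h : t.+1.-tuple bool) f h = \sum_(b : bool) \sum_(h : t.-tuple bool) f (b :: h).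
Proof.
rewrite pair_big /=.
rewrite (reindex (fun x : bool * t.-tuple bool => [tuple of x.1 :: x.2])) /=; last first.
  exists (fun h : t.+1.-tuple bool => (thead h, [tuple of behead h])).
    by case=> b h _; congr pair; apply: val_inj.
  by move=> h _; apply: val_inj => /=; rewrite [in RHS](tuple_eta h).
by apply: eq_bigr.
Qed.

Lemma sum_tuple0 (R : realType) (f : seq bool -> R) :
  \sum_(h : 0.-tuple bool) f h = f [::].
Proof.
rewrite (big_pred1 [tuple]) //= => h. by rewrite [h]tuple0; apply/esym/eqP.
Qed.
Section ES.
Variable R : realType.
Lemma es_ge (u : nat -> R) D : (forall t, 0 <= u t) ->
  ((\sum_(0 <= t < D) u t)%:E <= \sum_(0 <= t <oo) (u t)%:E)%E.
Proof.
move=> u0. rewrite -sumEFin. apply: nneseries_lim_ge => n _ _. by rewrite lee_fin.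
Qed.
Lemma es_le (u : nat -> R) (Y : \bar R) : (forall t, 0 <= u t) ->
  (forall D, ((\sum_(0 <= t < D) u t)%:E <= Y)%E) ->
  (\sum_(0 <= t <oo) (u t)%:E <= Y)%E.
Proof.
move=> u0 H. apply: lime_le. apply: is_cvg_nneseries => n _ _; by rewrite lee_fin.
apply: nearW => D. by rewrite sumEFin.
Qed.
End ES.
Section Tree.
Variables (R : realType) (n : nat) (p : R) (A : algorithm R n).
Hypotheses (p0 : 0 < p) (p1 : p <= 1/2) (vA : valid_alg A).
Ltac pp := have := p0; have := p1; move=> ? ?.

Definition S (pi : 'S_n) (F : seq bool -> R) (g : seq bool) (d : nat) : R :=
  \sum_(0 <= t < d) \sum_(h : t.-tuple bool) prefix_prob_rec p A pi g h * F (g ++ h).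

Notation st pi g b := (step_prob p A pi g b).

Lemma S_rec pi F g d : S pi F g d.+1 =
  F g + (st pi g true * S pi F (rcons g true) d + st pi g false * S pi F (rcons g false) d).
Proof.
rewrite /S big_nat_recl // (@sum_tuple0 R (fun s => prefix_prob_rec p A pi g s * F (g ++ s))) /= mul1r cats0; congr (_ + _).
rewrite !big_distrr /= -big_split /=; apply: eq_bigr => t _.
rewrite (@sum_tupleS R _ (fun s => prefix_prob_rec p A pi g s * F (g ++ s))) big_bool /= !big_distrr /=; congr (_ + _); apply: eq_bigr => h _;
  by rewrite mulrA -cat_rcons.
Qed.

Lemma S0 pi F g : S pi F g 0 = 0.
Proof. by rewrite /S big_geq. Qed.

Lemma st_ge0 pi g b : 0 <= st pi g b.
Proof.
rewrite /step_prob; case E: (A g) => [i|i j|q] //.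
- pp; case: ifP => _; lra.
- have := vA _ _ E; case/andP => q0 q1; case: b => //; lra.
Qed.

Lemma st_sum pi g : st pi g true + st pi g false <= 1.
Proof.
rewrite /step_prob; case E: (A g) => [i|i j|q] //.
- pp; case: (pi i < pi j)%N => /=; lra.
- lra.
Qed.

Lemma ppr_ge0 pi g h : 0 <= prefix_prob_rec p A pi g h.
Proof.
elim: h g => [|b h IH] g /=; first lra.
apply: mulr_ge0; [exact: st_ge0 | exact: IH].
Qed.

Lemma S_ge0 pi F g d : (forall h, 0 <= F h) -> 0 <= S pi F g d.
Proof.
move=> F0; apply: sumr_ge0 => t _; apply: sumr_ge0 => h _.
apply: mulr_ge0; [exact: ppr_ge0 | exact: F0].
Qed.

Lemma S_le pi F G g d : (forall h, F h <= G h) -> S pi F g d <= S pi G g d.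
Proof.
move=> FG; apply: ler_sum => t _; apply: ler_sum => h _.
apply: ler_wpM2l; [exact: ppr_ge0 | exact: FG].
Qed.

Lemma S_sum pi I (r : seq I) (P : pred I) (F : I -> seq bool -> R) g d :
  S pi (fun h => \sum_(i <- r | P i) F i h) g d = \sum_(i <- r | P i) S pi (F i) g d.
Proof.
rewrite /S exchange_big /=; apply: eq_bigr => t _.
rewrite exchange_big /=; apply: eq_bigr => h _. by rewrite mulr_sumr.
Qed.

Lemma S_scale pi c F g d : S pi (fun h => c * F h) g d = c * S pi F g d.
Proof.
rewrite /S mulr_sumr; apply: eq_bigr => t _; rewrite mulr_sumr; apply: eq_bigr => h _.
by rewrite mulrCA.
Qed.

Lemma S_add pi F G g d : S pi (fun h => F h + G h) g d = S pi F g d + S pi G g d.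
Proof.
rewrite /S -big_split; apply: eq_bigr => t _; rewrite -big_split; apply: eq_bigr => h _.
by rewrite mulrDr.
Qed.

Lemma S_mono_d pi F g d d' : (forall h, 0 <= F h) -> (d <= d')%N -> S pi F g d <= S pi F g d'.
Proof.
move=> F0 dd; rewrite /S (big_cat_nat (leq0n d) dd) /= lerDl.
apply: sumr_ge0 => t _; apply: sumr_ge0 => h _.
apply: mulr_ge0; [exact: ppr_ge0 | exact: F0].
Qed.

Definition is_output (a : Defs.action R n) : bool := if a is Output _ then true else false.

Lemma st_out pi g b i : A g = Output i -> st pi g b = 0.
Proof. by rewrite /step_prob => ->. Qed.

Lemma S_total pi F g d : (forall h, 0 <= F h <= (is_output (A h))%:R) -> S pi F g d <= 1.
Proof.
move=> F01; have F0 h : 0 <= F h by case/andP: (F01 h).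
elim: d g => [|d IH] g; first by rewrite S0.
rewrite S_rec; case E: (A g) => [i|i j|q].
- rewrite !(st_out pi g _ _ E) !mul0r !addr0; by case/andP: (F01 g); rewrite E.
- have := F01 g; rewrite E /= => /andP[_ Fg].
  have := st_sum pi g; have := st_ge0 pi g true; have := st_ge0 pi g false.
  have := IH (rcons g true); have := IH (rcons g false).
  have := S_ge0 pi F (rcons g true) d F0.
  have := S_ge0 pi F (rcons g false) d F0.
  move=> *; nra.
- have := F01 g; rewrite E /= => /andP[_ Fg].
  have := st_sum pi g; have := st_ge0 pi g true; have := st_ge0 pi g false.
  have := IH (rcons g true); have := IH (rcons g false).
  have := S_ge0 pi F (rcons g true) d F0.
  have := S_ge0 pi F (rcons g false) d F0.
  move=> *; nra.
Qed.

Definition outputs_in (W : pred 'I_n) (a : Defs.action R n) : bool :=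
  if a is Output i then W i else false.
Definition diffc (s1 s2 : 'S_n) (a : Defs.action R n) : bool :=
  if a is Compare i j then (s1 i < s1 j)%N != (s2 i < s2 j)%N else false.

Section C2.
Variables (s1 s2 : 'S_n) (W : pred 'I_n).

Fixpoint Q (m d : nat) (g : seq bool) {struct d} : R :=
  match d with 0 => 0 | d'.+1 =>
    (outputs_in W (A g))%:R +
    (st s1 g true * (if diffc s1 s2 (A g) then (if m is m'.+1 then Q m' d' (rcons g true) else 0)
                     else Q m d' (rcons g true)) +
     st s1 g false * (if diffc s1 s2 (A g) then (if m is m'.+1 then Q m' d' (rcons g false) else 0)
                     else Q m d' (rcons g false)))
  end.

Fixpoint N (j d : nat) (g : seq bool) {struct d} : R :=
  match j with 0 => 1 | j'.+1 =>
    match d with 0 => 0 | d'.+1 =>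
      st s1 g true * (if diffc s1 s2 (A g) then N j' d' (rcons g true) else N j d' (rcons g true)) +
      st s1 g false * (if diffc s1 s2 (A g) then N j' d' (rcons g false) else N j d' (rcons g false))
    end end.

Definition r : R := (1 - p) / p.

Lemma r_ge1 : 1 <= r.
Proof. pp; rewrite /r ler_pdivlMr //; lra. Qed.

Lemma st_eq g b : ~~ diffc s1 s2 (A g) -> st s1 g b = st s2 g b.
Proof.
rewrite /diffc /step_prob; case: (A g) => // i j; rewrite negbK => /eqP ->. done.
Qed.

Lemma st_diff g b : diffc s1 s2 (A g) -> st s1 g b <= r * st s2 g b.
Proof.
rewrite /diffc /step_prob /r; case: (A g) => // i j.
case: (s1 i < s1 j)%N; case: (s2 i < s2 j)%N => //= _; case: b => /=;
 rewrite mulrAC ler_pdivlMr //; pp; nra.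
Qed.

Lemma diff_out g : diffc s1 s2 (A g) -> outputs_in W (A g) = false.
Proof. by rewrite /diffc /outputs_in; case: (A g). Qed.

Let w := fun h => (outputs_in W (A h))%:R : R.
Let w0 h : 0 <= w h. Proof. by rewrite /w ler0n. Qed.

Lemma N_ge0 j d g : 0 <= N j d g.
Proof.
elim: d j g => [|d IH] [|j] g //=.
apply: addr_ge0; apply: mulr_ge0; (try exact: st_ge0); case: ifP => _; exact: IH.
Qed.

Lemma N_le1 j d g : N j d g <= 1.
Proof.
elim: d j g => [|d IH] [|j] g //=.
have := st_sum s1 g; have := st_ge0 s1 g true; have := st_ge0 s1 g false.
set x1 := (if _ then _ else _); set x2 := (if _ then _ else _).
have h1 : 0 <= x1 <= 1 by rewrite /x1; case: ifP => _; rewrite N_ge0 IH.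
have h2 : 0 <= x2 <= 1 by rewrite /x2; case: ifP => _; rewrite N_ge0 IH.
move: h1 h2 => /andP[? ?] /andP[? ?] ? ? ?; nra.
Qed.

Let dw := fun h => (diffc s1 s2 (A h))%:R : R.
Let dw0 h : 0 <= dw h. Proof. by rewrite /dw ler0n. Qed.
Let wout h : 0 <= w h <= (is_output (A h))%:R.
Proof. by rewrite /w /outputs_in /is_output; case: (A h) => [i|i j|q] /=; try case: (W i); rewrite /= ?lexx ?ler01. Qed.

Lemma Qa m d g : Q m d g <= r ^+ m * S s2 w g d.
Proof.
have r1 := r_ge1.
elim: d m g => [|d IH] m g; first by rewrite /= S0 mulr0.
rewrite S_rec /=.
have Sge t := S_ge0 s2 w (rcons g t) d w0.
have s2t := st_ge0 s2 g true; have s2f := st_ge0 s2 g false.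
have s1t := st_ge0 s1 g true; have s1f := st_ge0 s1 g false.
have rm1 : 1 <= r ^+ m by rewrite exprn_ege1.
case D: (diffc s1 s2 (A g)).
- rewrite /w (diff_out g D) /= add0r.
  case: m IH rm1 => [|m] IH rm1.
  + rewrite !mulr0 addr0 expr0 mul1r.
    rewrite ?add0r; apply: addr_ge0; apply: mulr_ge0 => //; exact: Sge.
  + have rm0 : 1 <= r ^+ m by rewrite exprn_ege1.
    have e1 := st_diff g true D; have e2 := st_diff g false D.
    have q1 := IH m (rcons g true); have q2 := IH m (rcons g false).
    have St := Sge true; have Sf := Sge false.
    rewrite exprS.
    set a := r ^+ m in rm0 q1 q2 *.
    set S1 := S s2 w (rcons g true) d in St q1 *.
    set S2 := S s2 w (rcons g false) d in Sf q2 *.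
    set Q1 := Q m d (rcons g true) in q1 *.
    set Q2 := Q m d (rcons g false) in q2 *.
    set x1 := st s1 g true in e1 s1t *. set x2 := st s1 g false in e2 s1f *.
    set y1 := st s2 g true in e1 s2t *. set y2 := st s2 g false in e2 s2f *.
    have h1 : x1 * Q1 <= r * a * (y1 * S1).
      have aS : 0 <= a * S1 by apply: mulr_ge0 => //; lra.
      apply: (le_trans (ler_wpM2l s1t q1)).
      apply: (le_trans (ler_wpM2r aS e1)).
      lra.
    have h2 : x2 * Q2 <= r * a * (y2 * S2).
      have aS : 0 <= a * S2 by apply: mulr_ge0 => //; lra.
      apply: (le_trans (ler_wpM2l s1f q2)).
      apply: (le_trans (ler_wpM2r aS e2)).
      lra.
    lra.
- have D' : ~~ diffc s1 s2 (A g) by rewrite D.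
  rewrite !(st_eq g _ D').
  have q1 := IH m (rcons g true); have q2 := IH m (rcons g false).
  have St := Sge true; have Sf := Sge false.
  set a := r ^+ m in rm1 q1 q2 *.
  set S1 := S s2 w (rcons g true) d in St q1 *.
  set S2 := S s2 w (rcons g false) d in Sf q2 *.
  set y1 := st s2 g true in s2t *. set y2 := st s2 g false in s2f *.
  have := w0 g; set wg := w g.
  move=> wg0.
  have h1 : y1 * Q m d (rcons g true) <= y1 * (a * S1) by apply: ler_wpM2l.
  have h2 : y2 * Q m d (rcons g false) <= y2 * (a * S2) by apply: ler_wpM2l.
  have h3 : wg <= a * wg by rewrite ler_peMl.
  rewrite /w -/wg; nra.
Qed.

Lemma N0 d g : N 0 d g = 1.
Proof. by case: d. Qed.

Lemma Qb m d g : S s1 w g d <= Q m d g + N m.+1 d g.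
Proof.
elim: d m g => [|d IH] m g; first by rewrite S0 /= addr0.
rewrite S_rec /=.
have s1t := st_ge0 s1 g true; have s1f := st_ge0 s1 g false.
have ss := st_sum s1 g.
case D: (diffc s1 s2 (A g)).
- case: m => [|m].
  + have St := S_total s1 w (rcons g true) d wout.
    have Sf := S_total s1 w (rcons g false) d wout.
    rewrite /= !N0 ?mulr0 ?addr0 ?mulr1.
    change (outputs_in W (A g))%:R with (w g).
    have h1 : st s1 g true * S s1 w (rcons g true) d <= st s1 g true by rewrite ler_piMr.
    have h2 : st s1 g false * S s1 w (rcons g false) d <= st s1 g false by rewrite ler_piMr.
    lra.
  + have q1 := IH m (rcons g true); have q2 := IH m (rcons g false).
    have h1 := ler_wpM2l s1t q1; have h2 := ler_wpM2l s1f q2.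
    change (outputs_in W (A g))%:R with (w g). lra.
- have q1 := IH m (rcons g true); have q2 := IH m (rcons g false).
  have h1 := ler_wpM2l s1t q1; have h2 := ler_wpM2l s1f q2.
  change (outputs_in W (A g))%:R with (w g). lra.
Qed.

Lemma Qc j d g : j%:R * N j d g <= S s1 dw g d.
Proof.
elim: d j g => [|d IH] [|j] g.
- by rewrite mul0r S0.
- by rewrite /= mulr0 S0.
- by rewrite mul0r; apply: S_ge0.
rewrite S_rec /=.
have s1t := st_ge0 s1 g true; have s1f := st_ge0 s1 g false.
have ss := st_sum s1 g.
case D: (diffc s1 s2 (A g)).
- have q1 := IH j (rcons g true); have q2 := IH j (rcons g false).
  have n1 := N_le1 j d (rcons g true); have n2 := N_le1 j d (rcons g false).
  have h1 := ler_wpM2l s1t q1; have h2 := ler_wpM2l s1f q2.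
  have k1 := ler_wpM2l s1t n1; have k2 := ler_wpM2l s1f n2.
  rewrite /dw D /=. rewrite -(addn1 j) natrD. lra.
- have q1 := IH j.+1 (rcons g true); have q2 := IH j.+1 (rcons g false).
  have h1 := ler_wpM2l s1t q1; have h2 := ler_wpM2l s1f q2.
  rewrite /dw D /=. lra.
Qed.

Lemma core m d : S s1 w [::] d <= r ^+ m * S s2 w [::] d + S s1 dw [::] d / m.+1%:R.
Proof.
have h1 := Qb m d [::]; have h2 := Qa m d [::]; have h3 := Qc m.+1 d [::].
have hm : 0 < m.+1%:R :> R by rewrite ltr0n.
have h4 : N m.+1 d [::] <= S s1 dw [::] d / m.+1%:R.
  by rewrite ler_pdivlMr // mulrC.
by apply: (le_trans h1); apply: lerD.
Qed.
End C2.

Definition Pes (pi : 'S_n) (Pa : pred (Defs.action R n)) : \bar R :=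
  (\sum_(0 <= t <oo) (\sum_(h : t.-tuple bool | Pa (A h)) reach_prob p A pi h)%:E)%E.

Definition ind (Pa : pred (Defs.action R n)) := fun h : seq bool => (Pa (A h))%:R : R.

Lemma partial_eq pi Pa D :
  \sum_(0 <= t < D) (\sum_(h : t.-tuple bool | Pa (A h)) reach_prob p A pi h)
  = S pi (ind Pa) [::] D.
Proof.
apply: eq_bigr => t _; rewrite big_mkcond; apply: eq_bigr => h _.
by rewrite /reach_prob /ind /=; case: (Pa (A h)); rewrite ?mulr1 ?mulr0.
Qed.

Let u_ge0 pi Pa t : 0 <= \sum_(h : t.-tuple bool | Pa (A h)) reach_prob p A pi h.
Proof. apply: sumr_ge0 => h _; exact: ppr_ge0. Qed.

Lemma Pes_ge pi Pa D : ((S pi (ind Pa) [::] D)%:E <= Pes pi Pa)%E.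
Proof. rewrite -partial_eq; apply: es_ge => t; exact: u_ge0. Qed.

Lemma Pes_le pi Pa (Y : \bar R) :
  (forall D, ((S pi (ind Pa) [::] D)%:E <= Y)%E) -> (Pes pi Pa <= Y)%E.
Proof.
move=> H; apply: es_le => [t|D]; first exact: u_ge0.
by rewrite partial_eq.
Qed.

Lemma ind_ge0 Pa h : 0 <= ind Pa h.
Proof. by rewrite /ind ler0n. Qed.


Lemma key (sg : 'S_n) (k g M : nat) (pil : 'I_g -> 'S_n) (Wl : 'I_g -> pred 'I_n)
    (al dl : R) (m : nat) (e : R) :
  0 < al ->
  (forall l i, Wl l i -> (k <= pil l i)%N) ->
  (forall i, al * ((sg i < k)%N)%:R <= \sum_(l < g) (Wl l i)%:R) ->
  (forall i j, \sum_(l < g) ((sg i < sg j)%N != (pil l i < pil l j)%N)%:R <= M%:R :> R) ->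
  ((1 - dl)%:E <= success_prob p A sg k)%E ->
  (forall l, ((1 - dl)%:E <= success_prob p A (pil l) k)%E) ->
  expected_comparisons p A sg = e%:E ->
  al * (1 - dl) <= g%:R * (r ^+ m * dl) + M%:R * e / m.+1%:R.
Proof.
move=> al0 H1 H2 H3 Hs Hl He.
pose wW l := fun h => (outputs_in (Wl l) (A h))%:R : R.
pose dwl l := fun h => (diffc sg (pil l) (A h))%:R : R.
have SC l D : S (pil l) (wW l) [::] D <= dl.
  have HH D' : S (pil l) (ind (outputs_topk (pil l) k)) [::] D' <= 1 - S (pil l) (wW l) [::] D.
    have e1 := S_mono_d (pil l) (wW l) [::] _ _ (fun h => ler0n _ _) (leq_maxl D D').
    have e2 := S_mono_d (pil l) (ind (outputs_topk (pil l) k)) [::] _ _ (ind_ge0 _) (leq_maxr D D').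
    have e3 : S (pil l) (fun h => wW l h + ind (outputs_topk (pil l) k) h) [::] (maxn D D') <= 1.
      apply: S_total => h; rewrite /wW /ind /outputs_in /outputs_topk /is_output.
      case: (A h) => [i|i j|q] /=; last by rewrite addr0 lexx.
        case Wi: (Wl l i); last by rewrite add0r ler0n ler_nat; case: (_ < _)%N.
        have hk : (pil l i < k)%N = false by rewrite ltnNge (H1 _ _ Wi).
        by rewrite hk /= addr0 ler01 lexx.
      by rewrite addr0 lexx.
    rewrite S_add in e3; lra.
  have := Hl l.
  have : (success_prob p A (pil l) k <= (1 - S (pil l) (wW l) [::] D)%:E)%E.
    by apply: (Pes_le (pil l) (outputs_topk (pil l) k)) => D'; rewrite lee_fin.
  move=> a b; have := le_trans b a; rewrite lee_fin; lra.
pose Y := g%:R * (r ^+ m * dl) + M%:R * e / m.+1%:R.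
have Hm : 0 < m.+1%:R :> R by rewrite ltr0n.
have SD D : al * S sg (ind (outputs_topk sg k)) [::] D <= Y.
  have a1 : al * S sg (ind (outputs_topk sg k)) [::] D <= \sum_(l < g) S sg (wW l) [::] D.
    rewrite -S_scale -S_sum; apply: S_le => h.
    rewrite /ind /wW /outputs_in /outputs_topk; case: (A h) => [i|i j|q].
    - exact: H2.
    - by rewrite mulr0 big1.
    - by rewrite mulr0 big1.
  have a2 : \sum_(l < g) S sg (wW l) [::] D <=
      \sum_(l < g) (r ^+ m * dl + S sg (dwl l) [::] D / m.+1%:R).
    apply: ler_sum => l _.
    apply: (le_trans (core sg (pil l) (Wl l) m D)); apply: lerD => //.
    apply: ler_wpM2l; first by apply: exprn_ge0; have := r_ge1; lra.
    exact: SC.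
  have a3 : \sum_(l < g) S sg (dwl l) [::] D <= M%:R * S sg (ind (@is_compare R n)) [::] D.
    rewrite -S_sum -S_scale; apply: S_le => h.
    rewrite /dwl /ind /diffc /is_compare; case: (A h) => [i|i j|q].
    - by rewrite big1 ?mulr0.
    - by rewrite mulr1; exact: H3.
    - by rewrite big1 ?mulr0.
  have a4 : S sg (ind (@is_compare R n)) [::] D <= e.
    by rewrite -lee_fin -He; apply: Pes_ge.
  rewrite big_split /= sumr_const card_ord -mulr_suml in a2.
  rewrite /Y; apply: (le_trans a1); apply: (le_trans a2).
  rewrite mulr_natl; apply: lerD => //.
  rewrite ler_pM2r ?invr_gt0 //; apply: (le_trans a3).
  by apply: ler_wpM2l => //; rewrite ler0n.
have : (success_prob p A sg k <= (Y / al)%:E)%E.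
  apply: (Pes_le sg (outputs_topk sg k)) => D; rewrite lee_fin ler_pdivlMr // mulrC; exact: SD.
move=> b; have := le_trans Hs b; rewrite lee_fin ler_pdivlMr // mulrC.
by [].
Qed.
End Tree.
Local Open Scope nat_scope.

Definition rotn (n a e t i : nat) : nat :=
  if (a + t <= e) && (e <= n) then
    if i < a then i else if i < e - t then i + t else if i < e then i - (e - t - a) else i
  else i.

Lemma rotn_lt n a e t i : i < n -> rotn n a e t i < n.
Proof. rewrite /rotn; repeat case: ifP; lia. Qed.

Lemma rotn_inj n a e t i j : rotn n a e t i = rotn n a e t j -> i = j.
Proof. rewrite /rotn; repeat case: ifP; lia. Qed.

Lemma rotn_diff n a e t i j :
  (i < j) != (rotn n a e t i < rotn n a e t j) ->
  ((e - t <= i) && (i < e)) || ((e - t <= j) && (j < e)).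
Proof. rewrite /rotn; repeat case: ifP; lia. Qed.
Local Open Scope ring_scope.

Definition rotf n a e t (i : 'I_n) : 'I_n := Ordinal (@rotn_lt n a e t i (ltn_ord i)).
Lemma rotf_inj n a e t : injective (@rotf n a e t).
Proof. move=> i j /(congr1 val) /= /rotn_inj H; exact: val_inj. Qed.
Definition rotp n a e t : 'S_n := perm (@rotf_inj n a e t).
Lemma rotpE n a e t (i : 'I_n) : (rotp n a e t i : nat) = rotn n a e t i.
Proof. by rewrite /rotp permE. Qed.

Lemma sum_eq1 (R : realType) g x : \sum_(l < g) ((l : nat) == x)%:R <= 1 :> R.
Proof.
suff -> : \sum_(l < g) ((l : nat) == x)%:R = ((x < g)%N)%:R :> R by case: (_ < _)%N => /=; rewrite ?mulr1n ?mulr0n ?ler01 ?lexx.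
elim: g => [|g IH]; first by rewrite big_ord0.
rewrite big_ord_recr /= IH -natrD; congr (_%:R).
rewrite ltnS leq_eqVlt orbC; case: (x < g)%N; case: eqVneq => //=; lia.
Qed.

Lemma arith1 (R : realType) (c lr Ln mm g n k e dl X : R) :
  0 < c < 1 -> 0 < lr -> 0 <= Ln -> Ln < 2 * mm * lr -> 0 < mm -> 1 <= g -> 0 < k ->
  0 <= n -> n <= 4 * g * k -> 0 <= dl <= 1/16 -> X * dl <= 1/4 ->
  g * (1 - dl) <= g * (X * dl) + 2%:R * e / mm ->
  (1 - c) / (32 * lr) * (n / k) * Ln <= e.
Proof.
move=> /andP[c0 c1] lr0 Ln0 hL mm0 g1 k0 n0 hn /andP[d0 d1] hX hk.
rewrite -mulrA in hk; set y := e / mm in hk.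
have ey : e = y * mm by rewrite /y mulrAC -mulrA divff ?mulr1 // gt_eqF.
have hy : g / 4 <= y.
  have : g * (1 - dl) - g * (X * dl) <= 2 * y by lra.
  have : g * (1/2) <= g * (1 - dl) - g * (X * dl).
    rewrite -mulrBr; apply: ler_wpM2l; lra.
  lra.
have hnk : n / k <= 4 * g by rewrite ler_pdivrMr //.
have h1 : (1 - c) / (32 * lr) * (n / k) * Ln <= 1 / (32 * lr) * (4 * g) * Ln.
  apply: ler_wpM2r => //; apply: ler_pM => //.
  - by apply: divr_ge0; lra.
  - by apply: divr_ge0; lra.
  - by apply: ler_wpM2r; [rewrite invr_ge0; lra | lra].
have h2 : 1 / (32 * lr) * (4 * g) * Ln <= 1 / (32 * lr) * (4 * g) * (2 * mm * lr).
  apply: ler_wpM2l; last lra.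
  apply: mulr_ge0; [apply: divr_ge0; lra | lra].
have h3 : 1 / (32 * lr) * (4 * g) * (2 * mm * lr) = g / 4 * mm.
  by field; apply/eqP; lra.
rewrite ey; apply: (le_trans h1); apply: (le_trans h2); rewrite h3.
by apply: ler_wpM2r; lra.
Qed.

Lemma arith2 (R : realType) (c lr Ln mm L n k e dl X : R) :
  0 < c < 1 -> 0 < lr -> 0 <= Ln -> Ln < 2 * mm * lr -> 0 < mm -> 0 < L -> L * (1 - c) <= 1 ->
  0 < k -> 0 <= n -> n <= 2 * k -> 0 <= dl <= 1/16 -> X * dl <= (1 - c) / 4 ->
  1 * (1 - dl) <= L * (X * dl) + L * e / mm ->
  (1 - c) / (32 * lr) * (n / k) * Ln <= e.
Proof.
move=> /andP[c0 c1] lr0 Ln0 hL mm0 L0 hLc k0 n0 hn /andP[d0 d1] hX hk.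
rewrite -mulrA in hk; set y := e / mm in hk.
have ey : e = y * mm by rewrite /y mulrAC -mulrA divff ?mulr1 // gt_eqF.
have h0 : L * (X * dl) <= L * ((1 - c) / 4) by apply: ler_wpM2l; lra.
have h0' : L * ((1 - c) / 4) <= 1/4.
  have -> : L * ((1 - c) / 4) = (L * (1 - c)) / 4 by rewrite mulrA.
  lra.
have hy : (1 - c) / 2 <= y.
  have h : 0 <= L * (y - (1 - c) / 2).
    rewrite mulrBr. have -> : L * ((1 - c) / 2) = (L * (1 - c)) / 2 by rewrite mulrA.
    lra.
  have : 0 <= y - (1 - c) / 2 by rewrite -(pmulr_rge0 _ L0).
  lra.
have hnk : n / k <= 2 by rewrite ler_pdivrMr // mulrC.
have h1 : (1 - c) / (32 * lr) * (n / k) * Ln <= (1 - c) / (32 * lr) * 2 * Ln.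
  apply: ler_wpM2r => //; apply: ler_wpM2l => //.
  by apply: divr_ge0; lra.
have h2 : (1 - c) / (32 * lr) * 2 * Ln <= (1 - c) / (32 * lr) * 2 * (2 * mm * lr).
  apply: ler_wpM2l; last lra.
  apply: mulr_ge0; [apply: divr_ge0; lra | lra].
have h3 : (1 - c) / (32 * lr) * 2 * (2 * mm * lr) = (1 - c) / 8 * mm.
  by field; apply/eqP; lra.
rewrite ey; apply: (le_trans h1); apply: (le_trans h2); rewrite h3.
by apply: ler_wpM2r; lra.
Qed.

Lemma choose_m (R : realType) (r x : R) : 1 < r -> 1 <= x ->
  exists m : nat, r ^+ m <= x /\ ln x < m.+1%:R * ln r.
Proof.
move=> r1 x1.
have lr0 : 0 < ln r := ln_gt0 r1.
have lx0 : 0 <= ln x := ln_ge0 x1.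
have q0 : 0 <= ln x / ln r by apply: divr_ge0 => //; lra.
have := truncn_itv q0; move: (Num.Def.trunc _) => m /andP[h1 h2].
exists m; split.
- have rm0 : 0 < r ^+ m by apply: exprn_gt0; lra.
  have hx : x \in Num.pos by rewrite posrE; lra.
  have hr : r ^+ m \in Num.pos by rewrite posrE.
  rewrite -(ler_ln hr hx) lnXn; last lra.
  by move: h1; rewrite ler_pdivlMr // mulr_natl.
- by move: h2; rewrite ltr_pdivrMr.
Qed.

Lemma ln_half (R : realType) (c nr : R) : 0 < c < 1 -> 16 / (1 - c) ^+ 2 <= nr ->
  ln nr <= 2 * ln ((1 - c) * nr / 4).
Proof.
move=> /andP[c0 c1] hn.
have c2 : 0 < (1 - c) ^+ 2 by apply: exprn_gt0; lra.
have h16 : 0 < 16 / (1 - c) ^+ 2 by apply: divr_gt0.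
have n0 : 0 < nr by lra.
have x0 : 0 < (1 - c) * nr / 4 by apply: divr_gt0 => //; apply: mulr_gt0 => //; lra.
rewrite -[2]/(2%:R) mulr_natl -lnXn //.
rewrite ler_ln ?posrE //; last by apply: exprn_gt0.
have : 16 <= (1 - c) ^+ 2 * nr by rewrite mulrC -ler_pdivrMr.
move=> h; rewrite expr2.
have -> : (1 - c) * nr / 4 * ((1 - c) * nr / 4) = ((1 - c) ^+ 2 * nr) * nr / 16.
  by rewrite expr2; field.
rewrite ler_pdivlMr // mulrC; apply: ler_wpM2r => //; lra.
Qed.

Lemma bool_le (R : realType) (b c d : bool) : (b -> c || d) -> (b%:R : R) <= c%:R + d%:R.
Proof. case: b; case: c; case: d => //= H; rewrite ?addr0 ?add0r ?lexx ?ler0n ?ler01 //; try lra; by have := H isT. Qed.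

Lemma div_between k x i : (0 < k)%N -> (k * x <= i)%N -> (i < k * x.+1)%N -> (i %/ k = x)%N.
Proof.
move=> k0 h1 h2; apply/eqP; rewrite eqn_leq.
have a : (i %/ k < x.+1)%N by rewrite ltn_divLR // mulnC.
have b : (x <= i %/ k)%N by rewrite leq_divRL // mulnC.
by rewrite b andbT -ltnS.
Qed.
Local Open Scope nat_scope.

Lemma s1_hb q k l nn : l < q.-1 -> q * k <= nn -> k * l.+2 <= nn.
Proof. move=> h1 h2; apply: leq_trans h2; rewrite mulnC leq_mul2r; apply/orP; right; lia. Qed.

Lemma s1_H1 nn k l i : 0 < k -> k * l.+2 <= nn -> i < nn ->
  ~~ ((k * l.+1 <= i) && (i < k * l.+2)) -> k <= rotn nn 0 (k * l.+2) k i.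
Proof.
move=> k0 hb hi W.
have kX : k <= k * l.+1 by rewrite leq_pmulr.
have e2 : k * l.+2 = k * l.+1 + k by rewrite mulnS addnC.
rewrite /rotn; rewrite e2 in hb W *; move: (k * l.+1) kX hb W => X kX hb W.
repeat case: ifP; lia.
Qed.

Lemma s1_H2 k l i : i < k -> ~~ ((k * l.+1 <= i) && (i < k * l.+2)).
Proof.
move=> hi; have kX : k <= k * l.+1 by case: k hi => // k _; rewrite leq_pmulr.
apply/negP => /andP[a _]; lia.
Qed.

Lemma s1_H3 nn k l i j : 0 < k ->
  (i < j) != (rotn nn 0 (k * l.+2) k i < rotn nn 0 (k * l.+2) k j) ->
  (l == (i %/ k).-1) || (l == (j %/ k).-1).
Proof.
move=> k0 /rotn_diff.
have e2 : k * l.+2 - k = k * l.+1 by rewrite mulnS addnC addnK.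
rewrite e2 => /orP[/andP[a b]|/andP[a b]].
- by rewrite (@div_between k l.+1 i k0 a b) eqxx.
- by rewrite (@div_between k l.+1 j k0 a b) eqxx orbT.
Qed.

Lemma s1_4gk nn k q : 2 <= q -> nn < q.+1 * k -> nn <= 4 * q.-1 * k.
Proof.
move=> q2 h; apply: leq_trans (ltnW h) _; rewrite leq_mul2r; apply/orP; right; lia.
Qed.

Lemma s2_H1 nn k a i : k <= nn -> nn - k <= k -> a <= k - (nn - k) ->
  (a <= i) && (i < a + (nn - k)) -> i < nn ->
  k <= rotn nn a nn (nn - a - (nn - k)) i.
Proof. move=> h1 h2 h3 /andP[h4 h5] h6; rewrite /rotn; repeat case: ifP; lia. Qed.

Lemma s2_cover s k i : 0 < s -> s <= k -> i < k ->
  (minn ((i %/ s) * s) (k - s) <= i) && (i < minn ((i %/ s) * s) (k - s) + s).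
Proof.
move=> s0 sk ik.
have h1 := leq_divM i s.
have h2 := ltn_ceil i s0.
move: (i %/ s) h1 h2 => q h1 h2.
rewrite mulSn in h2.
move: (q * s) h1 h2 => X h1 h2.
apply/andP; split; lia.
Qed.

Lemma s2_l0 s k i : i < k -> i %/ s < k %/ s + 1.
Proof. move=> ik; rewrite addn1 ltnS; apply: leq_div2r; exact: ltnW. Qed.

Lemma s2_Ls s k : (k %/ s + 1) * s <= k + s.
Proof. rewrite mulnDl mul1n leq_add2r; exact: leq_divM. Qed.

Local Open Scope ring_scope.

Theorem corollary4 (R : realType) (p c : R) :
  0 < p < 1 / 2 -> 0 < c < 1 ->
  exists C : R, 0 < C /\
  exists n0 : nat, forall n k : nat,
    (n0 <= n)%N -> (1 <= k)%N -> k%:R <= c * n%:R ->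
    forall A : algorithm R n, valid_alg A -> solves_ftmin_whp p A k ->
    exists pi : 'S_n,
      ((C * (n%:R / k%:R) * ln (n%:R : R))%:E <= expected_comparisons p A pi)%E.
Proof.
move=> /andP[p0 p2] /andP[c0 c1].
have ph : p <= 1/2 by lra.
have rr1 : 1 < r R p by rewrite /r ltr_pdivlMr // mul1r; lra.
have lr0 : 0 < ln (r R p) := ln_gt0 rr1.
exists ((1 - c) / (32 * ln (r R p))); split.
  by apply: divr_gt0; [lra | apply: mulr_gt0 => //; lra].
exists ((Num.Def.trunc (16 / (1 - c) ^+ 2)).+1 + 16)%N.
move=> nn k Hn Hk Hkc A vA Hsol.
exists (1%g : 'S_nn).
case E: (expected_comparisons p A (1%g : 'S_nn)) => [e| |]; last first.
- exfalso; have := Pes_ge R nn p A p0 ph vA 1%g (@is_compare R nn) 0.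
  rewrite S0; change (Pes R nn p A 1%g (@is_compare R nn)) with (expected_comparisons p A (1%g : 'S_nn)).
  by rewrite E.
- by rewrite leey.
rewrite lee_fin.
have c2 : 0 < (1 - c) ^+ 2 by apply: exprn_gt0; lra.
have q0 : 0 <= 16 / (1 - c) ^+ 2 by apply: divr_ge0 => //; lra.
have hnr : 16 / (1 - c) ^+ 2 <= nn%:R.
  have := truncn_itv q0; move: (Num.Def.trunc _) Hn => t Hn /andP[_ h2].
  apply: (le_trans (ltW h2)); rewrite ler_nat; exact: leq_trans (leq_addr _ _) Hn.
have Hn' : (16 <= nn)%N := leq_trans (leq_addl _ 16) Hn.
clear Hn.
have n16 : 16 <= nn%:R :> R by rewrite ler_nat.
have nr0 : 0 < nn%:R :> R by lra.
have hcn : 16 <= (1 - c) ^+ 2 * nn%:R by rewrite mulrC -ler_pdivrMr.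
have hx1 : 1 <= (1 - c) * nn%:R / 4.
  have : (1 - c) ^+ 2 * nn%:R <= (1 - c) * nn%:R.
    rewrite expr2 -mulrA ler_piMl //; last lra.
    by apply: mulr_ge0; lra.
  lra.
have [m [hrm hlm]] := choose_m R _ _ rr1 hx1.
have hLn : ln (nn%:R : R) < 2 * m.+1%:R * ln (r R p).
  have cc : 0 < c < 1 by rewrite c0 c1.
  have := @ln_half R c nn%:R cc hnr.
  lra.
have Ln0 : 0 <= ln (nn%:R : R) by apply: ln_ge0; lra.
have hd : 0 <= (nn%:R : R)^-1 <= 1/16.
  rewrite invr_ge0 ltW //=.
  rewrite mul1r lef_pV2 ?posrE //; lra.
have hX : r R p ^+ m * nn%:R^-1 <= (1 - c) / 4.
  have -> : (1 - c) / 4 = (1 - c) * nn%:R / 4 * nn%:R^-1.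
    by field; apply/eqP; lra.
  by apply: ler_wpM2r => //; rewrite invr_ge0 ltW.
have Hs pi : ((1 - nn%:R^-1)%:E <= success_prob p A pi k)%E := Hsol pi.
have hk0 : 0 < k%:R :> R by rewrite ltr0n.
case: (leqP (2 * k) nn) => h2k.
-
  have q2 : (2 <= nn %/ k)%N by rewrite leq_divRL.
  have qk : (nn %/ k * k <= nn)%N := leq_divM nn k.
  have qk' : (nn < (nn %/ k).+1 * k)%N := ltn_ceil nn Hk.
  move: (nn %/ k)%N q2 qk qk' => q q2 qk qk'.
  pose g := q.-1.
  pose pil := fun l : 'I_g => rotp nn 0 (k * l.+2) k.
  pose Wl := fun (l : 'I_g) (i : 'I_nn) => ~~ ((k * l.+1 <= i) && (i < k * l.+2))%N.
  have hb (l : 'I_g) : (k * l.+2 <= nn)%N := s1_hb _ _ _ _ (ltn_ord l) qk.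
  have H1 : forall (l : 'I_g) (i : 'I_nn), Wl l i -> (k <= pil l i)%N.
    move=> l i W; rewrite /pil rotpE; exact: s1_H1 _ _ _ _ Hk (hb l) (ltn_ord i) W.
  have H2 : forall i : 'I_nn, g%:R * (((1%g : 'S_nn) i < k)%N)%:R <= \sum_(l < g) (Wl l i)%:R :> R.
    move=> i; rewrite perm1; case: (ltnP i k) => hi.
    + rewrite mulr1 (eq_bigr (fun _ => 1)); first by rewrite sumr_const card_ord.
      by move=> l _; rewrite /Wl (s1_H2 k l (nat_of_ord i) hi).
    + rewrite mulr0; apply: sumr_ge0 => l _; exact: ler0n.
  have H3 : forall i j : 'I_nn,
      \sum_(l < g) ((((1%g : 'S_nn) i < (1%g : 'S_nn) j)%N != (pil l i < pil l j)%N))%:R <= 2%:R :> R.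
    move=> i j; rewrite !perm1.
    apply: (le_trans (y := \sum_(l < g) ((((l : nat) == ((i : nat) %/ k).-1))%:R +
                                       (((l : nat) == ((j : nat) %/ k).-1))%:R))).
      apply: ler_sum => l _; apply: bool_le; rewrite /pil !rotpE; exact: s1_H3.
    rewrite big_split /=.
    have := sum_eq1 R g (((i : nat) %/ k).-1); have := sum_eq1 R g (((j : nat) %/ k).-1).
    rewrite -[2%:R]/(1 + 1 : R); lra.
  have g1 : (1 <= g)%N by rewrite /g -ltnS prednK // ltnW.
  have g0 : 0 < g%:R :> R by rewrite ltr0n.
  have K := key R nn p A p0 ph vA 1%g k g 2 pil Wl g%:R nn%:R^-1 m e g0 H1 H2 H3 (Hs 1%g) (fun l => Hs (pil l)) E.
  have h4 : (nn <= 4 * g * k)%N := s1_4gk _ _ _ q2 qk'.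
  apply: (@arith1 R c (ln (r R p)) (ln nn%:R) m.+1%:R g%:R nn%:R k%:R e nn%:R^-1 (r R p ^+ m)) => //.
  + by rewrite c0 c1.
  + by rewrite ler1n.
  + by rewrite -natrM -natrM ler_nat.
  + lra.
-
  have kn : (k < nn)%N.
    have : c * nn%:R < nn%:R by rewrite -[X in _ < X]mul1r ltr_pM2r.
    move=> h; rewrite -(ltr_nat R); lra.
  pose s := (nn - k)%N.
  have s0 : (0 < s)%N by rewrite subn_gt0.
  have sk : (s <= k)%N by rewrite /s leq_subLR addnn -mul2n ltnW.
  pose L := (k %/ s + 1)%N.
  pose a := fun l : 'I_L => minn (l * s) (k - s).
  pose pil := fun l : 'I_L => rotp nn (a l) nn (nn - a l - s).
  pose Wl := fun (l : 'I_L) (i : 'I_nn) => ((a l <= i) && (i < a l + s))%N.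
  have H1 : forall (l : 'I_L) (i : 'I_nn), Wl l i -> (k <= pil l i)%N.
    move=> l i W; rewrite /pil rotpE; apply: s2_H1 => //.
    - exact: ltnW.
    - exact: geq_minr.
  have H2 : forall i : 'I_nn, 1 * (((1%g : 'S_nn) i < k)%N)%:R <= \sum_(l < L) (Wl l i)%:R :> R.
    move=> i; rewrite perm1; case: (ltnP i k) => hi.
    + rewrite mul1r.
      pose l0 : 'I_L := Ordinal (s2_l0 s _ _ hi).
      rewrite (bigD1 l0) //=.
      have W0 : Wl l0 i := s2_cover _ _ _ s0 sk hi.
      rewrite W0 lerDl; apply: sumr_ge0 => l _; exact: ler0n.
    + rewrite mulr0.
      apply: sumr_ge0 => l _; exact: ler0n.
  have H3 : forall i j : 'I_nn,
      \sum_(l < L) ((((1%g : 'S_nn) i < (1%g : 'S_nn) j)%N != (pil l i < pil l j)%N))%:R <= L%:R :> R.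
    move=> i j; apply: (le_trans (y := \sum_(l < L) (1 : R))).
      apply: ler_sum => l _; case: (_ != _) => /=; rewrite ?ler01 ?lexx //.
    by rewrite sumr_const card_ord.
  have K := key R nn p A p0 ph vA 1%g k L L pil Wl 1 nn%:R^-1 m e ltr01 H1 H2 H3 (Hs 1%g) (fun l => Hs (pil l)) E.
  have hLs : (L * s <= nn)%N.
    apply: leq_trans (s2_Ls s k) _; rewrite /s subnKC //; exact: ltnW.
  have hs : (1 - c) * nn%:R <= s%:R :> R.
    rewrite /s natrB; last exact: ltnW.
    lra.
  have hL0 : 0 < L%:R :> R by rewrite ltr0n /L addn1.
  have hLc : L%:R * (1 - c) <= 1.
    have h : L%:R * ((1 - c) * nn%:R) <= nn%:R.
      apply: le_trans (ler_wpM2l (ler0n _ _) hs) _.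
      by rewrite -natrM ler_nat.
    by rewrite -(ler_pM2r nr0) mul1r -mulrA.
  apply: (@arith2 R c (ln (r R p)) (ln nn%:R) m.+1%:R L%:R nn%:R k%:R e nn%:R^-1 (r R p ^+ m)) => //.
  + by rewrite c0 c1.
  + by rewrite -natrM ler_nat ltnW.
Qed.
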